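(* Let $n\ge 2$, $0<p<q$ be real numbers and let $A$ be the $n\times n$ matrix with columns $a_k=q e_k-p e_{k+1}$ ($1\le k\le n-1$) and $a_n=q e_n+p e_1$. Let $S=(s_{i,j})_{i,j=1}^n$ be a signed permutation matrix, i.e. $S\in\{0,\pm1\}^{n\times n}$ and every row and every column of $S$ contains exactly one nonzero entry. Then $S(A\mathbb{Z}^n)=A\mathbb{Z}^n$ if and only if all of the following hold: $s_{i,j}=s_{i+1,j+1}$ for all $i,j<n$; $s_{i,n}=-s_{i+1,1}$ and $s_{n,j}=-s_{1,j+1}$ for all $i,j<n$; and $s_{n,n}=s_{1,1}$.
   Context: $e_i$ denotes the $i$-th standard unit vector of $\mathbb{R}^n$. *)

(* Defs.v *)
From HB Require Import structures.
From mathcomp Require Import all_boot all_order all_algebra.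
From mathcomp Require Import reals.
Set Implicit Arguments. Unset Strict Implicit. Unset Printing Implicit Defensive.
Import Order.TTheory GRing.Theory Num.Theory.
Local Open Scope ring_scope.

(* Indices are 0-based: paper index k corresponds to ordinal k-1. *)

(* The matrix A whose k-th column is q e_k - p e_{k+1} for k < n (1-based)
   and whose n-th column is q e_n + p e_1. *)
Definition Amx (R : ringType) (n : nat) (p q : R) : 'M[R]_n :=
  \matrix_(i < n, j < n)
    ((if i == j then q else 0)
     - (if (j.+1 < n)%N && (val i == j.+1) then p else 0)
     + (if (val j == n.-1) && (val i == 0%N) then p else 0)).

Definition lattice (R : ringType) (n : nat) (B : 'M[R]_n) : 'cV[R]_n -> Prop :=
  fun x => exists z : 'cV[int]_n, x = B *m map_mx (fun k : int => k%:~R) z.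

Definition mx_image (R : ringType) (n : nat) (S : 'M[R]_n)
  (L : 'cV[R]_n -> Prop) : 'cV[R]_n -> Prop :=
  fun x => exists y, L y /\ x = S *m y.

Definition signed_perm_mx (R : ringType) (n : nat) (S : 'M[R]_n) : Prop :=
  (forall i j, S i j \in [:: 0; 1; -1]) /\
  (forall i, #|[set j | S i j != 0]| = 1%N) /\
  (forall j, #|[set i | S i j != 0]| = 1%N).

(* Main.v *)
Require Import Defs.
From HB Require Import structures.
From mathcomp Require Import all_boot all_order all_algebra.
From mathcomp Require Import reals.
From mathcomp Require Import ring lra zify.
Import Order.TTheory GRing.Theory Num.Theory.
Set Implicit Arguments. Unset Strict Implicit. Unset Printing Implicit Defensive.
Local Open Scope ring_scope.



Section Shift.
Variable m : nat.
Local Notation n := m.+2.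

Definition nxn (k : nat) : nat := if (k.+1 < n)%N then k.+1 else 0%N.
Definition nx (k : 'I_n) : 'I_n := inord (nxn k).
Lemma nxE k : val (nx k) = nxn k.
Proof. rewrite /nx /= inordK // /nxn; case: ifP => //. Qed.
Definition sg (R : pzRingType) (k : 'I_n) : R := if (k.+1 < n)%N then 1 else -1.
Definition Cm (R : pzRingType) : 'M[R]_n := \matrix_(i, j) (sg R j * (i == nx j)%:R).

Lemma nx_neq k : nx k != k.
Proof. rewrite -val_eqE nxE /nxn /=; case: ifP => h1; have := ltn_ord k; lia. Qed.

Lemma nx_inj : injective nx.
Proof. move=> i j /(congr1 val); rewrite !nxE /nxn => h; apply/val_inj => /=.
  move: h; case: ifP => h1; case: ifP => h2; have := ltn_ord i; have := ltn_ord j; lia. Qed.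

Lemma nx_surj i : exists j, i = nx j.
Proof.
case: (posnP i) => [i0|ip].
  exists (@Ordinal n m.+1 (ltnSn _)); apply/val_inj; rewrite nxE /nxn /= ltnn i0 //.
have hi : (i.-1 < n)%N by have := ltn_ord i; lia.
exists (Ordinal hi); apply/val_inj; rewrite nxE /nxn /=.
case: ifP => h1; have := ltn_ord i; lia.
Qed.

Lemma sg2 (R : pzRingType) k : sg R k * sg R k = 1.
Proof. by rewrite /sg; case: ifP; rewrite ?mulr1 ?mulrNN ?mulr1. Qed.

Lemma mulmx_Cm_r (R : pzRingType) c (M : 'M[R]_(c, n)) i k : (M *m Cm R) i k = M i (nx k) * sg R k.
Proof.
rewrite mxE (bigD1 (nx k)) //= big1 ?addr0; first by rewrite mxE eqxx mulr1.
by move=> j hj; rewrite mxE (negbTE hj) mulr0 mulr0.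
Qed.

Lemma mulmx_Cm_l (R : pzRingType) c (M : 'M[R]_(n, c)) j k : (Cm R *m M) (nx j) k = sg R j * M j k.
Proof.
rewrite mxE (bigD1 j) //= big1 ?addr0; first by rewrite mxE eqxx mulr1.
move=> j' hj; rewrite mxE; case: eqP => [/nx_inj e|_]; first by rewrite e eqxx in hj.
by rewrite mulr0 mul0r.
Qed.

Lemma AmxE (R : nzRingType) (p q : R) : Amx n p q = q%:M - p *: Cm R.
Proof.
apply/matrixP => i j; rewrite !mxE /sg.
have E : forall b : bool, (if b then q else 0) = q *+ b by case.
have hi := ltn_ord i; have hj := ltn_ord j.
rewrite -(val_eqE i (nx j)) nxE /nxn E.
have [hj1|hj1] := boolP (j.+1 < n)%N; rewrite ?hj1 ?(negbTE hj1) /=.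
  have -> : (j == m.+1 :> nat) = false by lia.
  rewrite /= addr0 mul1r; case: (i == j.+1 :> nat);
   by rewrite /= ?mulr1n ?mulr0n ?mulr1 ?mulr0 ?subr0 ?sub0r.
have -> : (j == m.+1 :> nat) = true by lia.
rewrite /= subr0 mulN1r mulrN opprK.
by case: (i == 0%N :> nat); rewrite /= ?mulr1n ?mulr0n ?mulr1 ?mulr0 ?subr0 ?add0r ?addr0.
Qed.


Definition nrm (R : pzRingType) (v : 'cV[R]_n) := \sum_i v i 0 ^+ 2.

Lemma nrm_tr (R : comPzRingType) (v : 'cV[R]_n) : nrm v = (v^T *m v) 0 0.
Proof. rewrite mxE; apply: eq_bigr => i _; by rewrite !mxE expr2. Qed.

Lemma nrm_orth (R : comPzRingType) (U : 'M[R]_n) v :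
  U^T *m U = 1%:M -> nrm (U *m v) = nrm v.
Proof. by move=> hU; rewrite !nrm_tr trmx_mul -!mulmxA (mulmxA U^T) hU mul1mx. Qed.

Lemma Cm_orth (R : comPzRingType) : (Cm R)^T *m Cm R = 1%:M.
Proof.
apply/matrixP => i j; rewrite mulmx_Cm_r !mxE.
case: (@eqP _ i j) => [<-|/eqP hij]; first by rewrite eqxx mulr1 sg2.
have -> : (nx j == nx i) = false by apply/negbTE; apply: contra hij => /eqP /nx_inj ->.
by rewrite mulr0 mul0r.
Qed.

Lemma nrm2 (R : pzRingType) (v : 'cV[R]_n) (r s : 'I_n) a b : r != s ->
  (forall i, v i 0 = a * (i == r)%:R + b * (i == s)%:R) -> nrm v = a ^+ 2 + b ^+ 2.
Proof.
move=> hrs hv; rewrite /nrm (bigD1 r) //= (bigD1 s) 1?eq_sym //= big1 ?addr0.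
  rewrite !hv eqxx (negbTE hrs) eq_sym (negbTE hrs) eqxx /= mulr1 mulr0 mulr0 mulr1 addr0 add0r //.
move=> i /andP [his hir]; rewrite hv (negbTE his) (negbTE hir) !mulr0 addr0.
by rewrite expr2 mulr0.
Qed.

Lemma nrm_formula (R : comNzRingType) (p q : R) (X : 'cV[R]_n) :
  nrm (Amx n p q *m X) = (q - p) ^+ 2 * nrm X + p * q * nrm (X - Cm R *m X).
Proof.
have hY : nrm (Cm R *m X) = nrm X by apply: nrm_orth; exact: Cm_orth.
rewrite AmxE mulmxBl mul_scalar_mx -scalemxAl.
move: hY; set Y := Cm R *m X => hY.
have -> : nrm X = \sum_i X i 0 ^+ 2 by [].
rewrite /nrm.
transitivity (\sum_i ((q - p) ^+ 2 * X i 0 ^+ 2 + p * q * (X - Y) i 0 ^+ 2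
                  + (p ^+ 2 - p * q) * (Y i 0 ^+ 2 - X i 0 ^+ 2))).
  by apply: eq_bigr => i _; rewrite !mxE; ring.
rewrite !big_split /= -!mulr_sumr sumrB.
move: hY; rewrite /nrm => ->; rewrite subrr mulr0 addr0 //.
Qed.

End Shift.



Section SP.
Variable R : realType.
Variable n : nat.
Variable S : 'M[R]_n.
Hypothesis hS : signed_perm_mx S.

Lemma sp_entry i j : S i j = 0 \/ S i j = 1 \/ S i j = -1.
Proof.
case: hS => h _; have := h i j; rewrite !inE.
by case/orP => [/eqP->|/orP [/eqP->|/eqP->]]; auto.
Qed.

Lemma sp_row i : exists c, forall j, (S i j != 0) = (j == c).
Proof.
case: hS => _ [h _]; have /eqP/cards1P [c E] := h i.
by exists c => j; move/setP: E => /(_ j); rewrite !inE.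
Qed.

Lemma sp_col j : exists r, forall i, (S i j != 0) = (i == r).
Proof.
case: hS => _ [_ h]; have /eqP/cards1P [c E] := h j.
by exists c => i; move/setP: E => /(_ i); rewrite !inE.
Qed.

Lemma sp_sq i j : S i j != 0 -> S i j * S i j = 1.
Proof. by case: (sp_entry i j) => [->|[->|->]]; rewrite ?eqxx // ?mulr1 ?mulrNN ?mulr1. Qed.

Lemma sp_trS : S^T *m S = 1%:M.
Proof.
apply/matrixP => i j; rewrite !mxE.
have [r hr] := sp_col i.
rewrite (bigD1 r) //= big1 ?addr0; last first.
  by move=> k hk; rewrite mxE; have := hr k; rewrite (negbTE hk) => /negbFE/eqP ->; rewrite mul0r.
rewrite mxE.
have hri : S r i != 0 by rewrite hr.
have [c hc] := sp_row r.
have ic : i = c by apply/eqP; rewrite -hc.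
case: (@eqP _ i j) => [<-|/eqP hij]; first by rewrite sp_sq.
have : S r j == 0 by apply/negPn; rewrite hc -ic eq_sym.
by move/eqP ->; rewrite mulr0.
Qed.

Lemma sp_Str : S *m S^T = 1%:M.
Proof. exact: mulmx1C sp_trS. Qed.

Definition Si : 'M[int]_n :=
  \matrix_(i, j) (if S i j == 0 then 0 else if S i j == 1 then 1 else -1).

Lemma SiE : map_mx (fun k : int => k%:~R) Si = S.
Proof.
apply/matrixP => i j; rewrite !mxE.
by case: (sp_entry i j) => [->|[->|->]]; rewrite ?eqxx //=;
  rewrite ?oner_eq0 ?(eqr_opp _ 1) ?eqrNxx ?oppr_eq0 ?oner_eq0 //=;
  case: ifP => //=; move/eqP => h; exfalso; move: h; lra.
Qed.

End SP.



Section Int.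
Variable m : nat.
Local Notation n := m.+2.
Local Notation ir := (fun k : int => k%:~R).

Lemma map_Cm (R : pzRingType) : map_mx ir (Cm m int) = Cm m R.
Proof.
apply/matrixP => i j; rewrite !mxE /= rmorphM /= rmorph_nat /sg.
by case: ifP; rewrite ?rmorph1 ?rmorphN1.
Qed.

Lemma map_Cm_mul (R : pzRingType) (w : 'cV[int]_n) :
  map_mx ir (Cm m int *m w) = Cm m R *m map_mx ir w.
Proof. by rewrite map_mxM map_Cm. Qed.

Lemma nrm_map (R : pzRingType) (w : 'cV[int]_n) : nrm (map_mx ir w) = (nrm w)%:~R :> R.
Proof.
rewrite /nrm rmorph_sum; apply: eq_bigr => i _; by rewrite mxE rmorphXn.
Qed.

Lemma fix_zero (w : 'cV[int]_n) : Cm m int *m w = w -> w = 0.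
Proof.
move=> H.
have step j : w (nx j) 0 = sg int j * w j 0.
  by rewrite -{1}H mulmx_Cm_l.
have ind t : (t < n)%N -> w (inord t) 0 = w (inord 0) 0.
  elim: t => [//|t IH] ht.
  have e : (inord t.+1 : 'I_n) = nx (inord t).
    apply/val_inj; rewrite nxE /nxn /= !inordK ?ht //; lia.
  rewrite e step IH; last lia.
  by rewrite /sg /= inordK ?ht ?mul1r //; lia.
have h0 : w (inord 0) 0 = 0.
  have e : (inord 0 : 'I_n) = nx (inord m.+1).
    by apply/val_inj; rewrite nxE /nxn /= !inordK // ltnn.
  have := step (inord m.+1); rewrite -e ind // /sg /= inordK // ltnn mulN1r.
  move=> h; lia.
apply/matrixP => i j; rewrite (ord1 j) mxE -(inord_val i) ind //.
Qed.

Lemma f2sq (x : 'F_2) : x ^+ 2 = x.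
Proof. case: x => [[|[|//]] Hx]; by apply/val_inj. Qed.

Lemma sum_Cm (R : pzRingType) (W : 'cV[R]_n) :
  \sum_i (Cm m R *m W) i 0 = \sum_j sg R j * W j 0.
Proof. rewrite (reindex_inj (@nx_inj m)) /=; apply: eq_bigr => j _; exact: mulmx_Cm_l. Qed.

Lemma parity (w : 'cV[int]_n) : nrm (w - Cm m int *m w) != 1.
Proof.
apply/negP => /eqP h.
have := congr1 (fun z : int => z%:~R : 'F_2) h.
rewrite -nrm_map raddfB /= map_Cm_mul /nrm.
set W := map_mx _ w.
under eq_bigr do rewrite f2sq.
have -> : \sum_i (W - Cm m _ *m W) i 0 = \sum_i W i 0 - \sum_i (Cm m _ *m W) i 0.
  by rewrite -sumrB; apply: eq_bigr => i _; rewrite !mxE.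
rewrite sum_Cm.
have sgF (j : 'I_n) : sg 'F_2 j = 1 by rewrite /sg; case: ifP => // _; apply/val_inj.
rewrite [X in _ - X](eq_bigr (fun j => W j 0)); last by move=> j _; rewrite sgF mul1r.
by rewrite subrr => /(congr1 val).
Qed.

End Int.



Lemma arith1 (R : realType) (p q x e s b : R) : 0 < p -> p < q ->
  (x = 1 \/ x = -1) -> (e = 1 \/ e = -1) -> (s = 1 \/ s = -1) -> (b = 0 \/ b = 1) ->
  q * x = e * - (p * s * b) -> False.
Proof.
move=> hp hpq hx he hs hb.
case: hx => ->; case: he => ->; case: hs => ->; case: hb => ->; move=> hh; nra.
Qed.

Lemma arith2 (R : realType) (p q e b sk a sm d : R) :
  q * (e * b) - p * sk * a = e * (q * b - p * sm * d) -> p * (sk * a) = p * (e * sm * d).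
Proof. move=> hh; nra. Qed.

Section Core.
Variable R : realType.
Variable m : nat.
Local Notation n := m.+2.
Local Notation ir := (fun k : int => k%:~R).
Variables p q : R.
Hypothesis hp : 0 < p.
Hypothesis hpq : p < q.
Variable S : 'M[R]_n.
Hypothesis hS : signed_perm_mx S.
Local Notation A := (Amx n p q).

Lemma Aent i j : A i j = q * (i == j)%:R - p * sg R j * (i == nx j)%:R.
Proof. by rewrite AmxE !mxE -[q *+ _]mulr_natr !mulrA. Qed.

Lemma SAent i k : (S *m A) i k = q * S i k - p * sg R k * S i (nx k).
Proof.
rewrite AmxE mulmxBr mul_mx_scalar -scalemxAr.
have := mulmx_Cm_r S i k; move: (S *m Cm m R) => T hT; rewrite !mxE hT.
by rewrite [S i (nx k) * _]mulrC mulrA.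
Qed.

Lemma nrm_ge0 (v : 'cV[int]_n) : 0 <= nrm v.
Proof. by apply: sumr_ge0 => i _; rewrite sqr_ge0. Qed.

Lemma nrm_eq0 (v : 'cV[int]_n) : nrm v = 0 -> v = 0.
Proof.
move=> h; apply/matrixP => i j; rewrite (ord1 j) mxE.
have := @psumr_eq0P _ _ xpredT (fun i => v i 0 ^+ 2) (fun i _ => sqr_ge0 _) h i isT.
by move/eqP; rewrite sqrf_eq0 => /eqP.
Qed.

Lemma colA_nrm k : nrm (col k A) = p ^+ 2 + q ^+ 2.
Proof.
rewrite (@nrm2 _ _ _ k (nx k) q (- (p * sg R k))); first last.
- by move=> i; rewrite mxE Aent mulNr.
- by rewrite eq_sym nx_neq.
by rewrite sqrrN exprMn [sg R k ^+ 2]expr2 sg2 mulr1 addrC.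
Qed.

Lemma core (H : forall x, mx_image S (lattice A) x <-> lattice A x) k :
  exists m0 (e : R), (e = 1 \/ e = -1) /\ forall i, (S *m A) i k = e * A i m0.
Proof.
have [w hw] : lattice A (S *m col k A).
  apply/H; exists (col k A); split => //.
  by exists (delta_mx k 0); rewrite map_delta_mx colE.
set Nw := nrm w; set Md := nrm (w - Cm m int *m w).
have key : p ^+ 2 + q ^+ 2 = (q - p) ^+ 2 * Nw%:~R + p * q * Md%:~R.
  rewrite -(colA_nrm k) -(nrm_orth _ (@sp_trS _ _ _ hS)) hw nrm_formula -map_Cm_mul -map_mxB.
  by rewrite !nrm_map.
have N0 := nrm_ge0 w; have M0 := nrm_ge0 (w - Cm m int *m w).
have nrm0 : nrm (0 : 'cV[int]_n) = 0 by rewrite /nrm big1 // => i _; rewrite mxE expr2 mulr0.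
have Mnz : Md != 0.
  apply/eqP => hMd; have := hMd; move/nrm_eq0/eqP; rewrite subr_eq0 eq_sym => /eqP /fix_zero w0.
  move: key; rewrite hMd /Nw w0 nrm0 mulr0z !mulr0 addr0 => key.
  have : 0 < p ^+ 2 + q ^+ 2.
    by apply: ltr_wpDr; [exact: sqr_ge0 | rewrite exprn_gt0].
  by rewrite key lt_irreflexive.
have Mne1 := parity w.
have M2 : 2 <= Md by lia.
have Nnz : Nw != 0.
  apply/eqP => /nrm_eq0 w0; move: Mnz; by rewrite /Md w0 mulmx0 subr0 nrm0 eqxx.
have N1 : Nw = 1.
  have hN : 1 <= Nw by lia.
  suff : Nw <= 1 by lia.
  rewrite leNgt; apply/negP => hN2.
  have hN2' : 2 <= Nw%:~R :> R by rewrite -[2]/(2%:~R : R) ler_int.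
  have hM2' : 2 <= Md%:~R :> R by rewrite -[2]/(2%:~R : R) ler_int.
  move: key hN2' hM2'; move: (Nw%:~R) (Md%:~R) => NN MM key hN2' hM2'.
  have h1 : 0 <= (q - p) ^+ 2 * (NN - 2) by apply: mulr_ge0; [exact: sqr_ge0 | lra].
  have h2 : 0 <= p * q * (MM - 2) by apply: mulr_ge0; [apply: mulr_ge0; [exact: ltW | exact: ltW (lt_trans hp hpq)] | rewrite subr_ge0].
  have h3 : 0 < (q - p) ^+ 2 by rewrite exprn_gt0 // subr_gt0.
  clear -key h1 h2 h3; nra.
have [m0 hm0] : exists m0, w m0 0 != 0.
  case: (pickP (fun i => w i 0 != 0)) => [i hi|h0]; first by exists i.
  exfalso; move/eqP: Nnz; apply; rewrite /Nw /nrm big1 // => i _.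
  by have := h0 i; move/negbFE/eqP => ->; rewrite expr2 mulr0.
have hsplit : Nw = w m0 0 ^+ 2 + \sum_(i | i != m0) w i 0 ^+ 2 by rewrite /Nw /nrm (bigD1 m0).
have rest0 : 0 <= \sum_(i | i != m0) w i 0 ^+ 2 by apply: sumr_ge0 => i _; exact: sqr_ge0.
have sq1 : 1 <= w m0 0 ^+ 2.
  move: hm0; rewrite expr2; move: (w m0 0) => x hx; nia.
have sq : w m0 0 ^+ 2 = 1 by lia.
have rest : \sum_(i | i != m0) w i 0 ^+ 2 = 0 by lia.
have others i : i != m0 -> w i 0 = 0.
  move=> hi; have := @psumr_eq0P _ _ (fun i => i != m0) (fun i => w i 0 ^+ 2) (fun i _ => sqr_ge0 _) rest i hi.
  by move/eqP; rewrite sqrf_eq0 => /eqP.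
exists m0, (w m0 0)%:~R; split.
  have : w m0 0 = 1 \/ w m0 0 = -1 by move: sq; rewrite expr2; move: (w m0 0) => x hx; nia.
  by case=> ->; [left | right].
move=> i.
have := congr1 (fun M : 'cV[R]_n => M i 0) hw; rewrite /= colE mulmxA -colE mxE => ->.
rewrite mxE (bigD1 m0) //= big1 ?addr0; first by rewrite [_ m0 0]mxE mulrC.
by move=> j hj; rewrite [_ j 0]mxE others // mulr0.
Qed.

Lemma sg_cases (k : 'I_n) : sg R k = 1 \/ sg R k = -1.
Proof. by rewrite /sg; case: ifP; auto. Qed.

Lemma comm_col (H : forall x, mx_image S (lattice A) x <-> lattice A x) k i :
  (S *m Cm m R) i k = (Cm m R *m S) i k.
Proof.
have [m0 [e [he hcol]]] := core H k.
have [r hr] := sp_col hS k.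
have [c hc] := sp_row hS r.
have hrk : S r k != 0 by rewrite hr.
have kc : k = c by apply/eqP; rewrite -hc.
have Srn : S r (nx k) = 0 by apply/eqP/negPn; rewrite hc -kc nx_neq.
have hp0 : p != 0 by rewrite gt_eqF.
have rm0 : r = m0.
{   apply/eqP; apply/negPn/negP => hne.
  have := hcol r; rewrite SAent Aent Srn mulr0 subr0 (negbTE hne) mulr0 add0r.
  have hpos : 0 < q by apply: lt_trans hpq.
  have hs := sg_cases m0; have hx := sp_entry hS r k.
  case: hx => [h0|hx]; first by rewrite h0 eqxx in hrk.
  apply: (@arith1 _ p q (S r k) e (sg R m0) (r == nx m0)%:R hp hpq hx he hs).
    by case: (r == nx m0); [right|left].
}
have Srk : S r k = e.
  have := hcol r; rewrite SAent Aent Srn mulr0 subr0 rm0 eqxx.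
  have -> : (m0 == nx m0) = false by apply/negbTE; rewrite eq_sym nx_neq.
  rewrite mulr0 subr0 mulr1 => hh.
  have qnz : q != 0 by rewrite gt_eqF // (lt_trans hp hpq).
  by apply: (mulfI qnz); rewrite hh mulrC.
have Sk j : S j k = e * (j == m0)%:R.
  case: (@eqP _ j m0) => [->|/eqP hj]; first by rewrite -rm0 Srk mulr1.
  by rewrite mulr0; apply/eqP/negPn; rewrite hr rm0.
have key j : sg R k * S j (nx k) = e * sg R m0 * (j == nx m0)%:R.
  have := hcol j; rewrite SAent Aent Sk => hh.
  apply: (mulfI hp0); exact: arith2 hh.
have [j ->] := nx_surj i.
rewrite mulmx_Cm_r mulmx_Cm_l mulrC key Sk.
case: (@eqP _ j m0) => [->|/eqP hj]; first by rewrite !eqxx !mulr1 mulrC.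
have -> : (nx j == nx m0) = false by apply/negbTE; apply: contra hj => /eqP /nx_inj ->.
by rewrite !mulr0.
Qed.

End Core.



Section Final.
Variable m : nat.
Local Notation n := m.+2.

Lemma nx_succ (i i' : 'I_n) : val i' = (val i).+1 -> i' = nx i.
Proof.
move=> /= h; apply/val_inj; rewrite nxE /nxn /=; have := ltn_ord i'; case: ifP => h1 h2; lia.
Qed.

Lemma sg_succ (R : pzRingType) (i i' : 'I_n) : val i' = (val i).+1 -> sg R i = 1.
Proof. move=> /= h; rewrite /sg; have := ltn_ord i'; case: ifP => // h1 h2; lia. Qed.

Lemma nx_last (l f : 'I_n) : val l = m.+1 -> val f = 0%N -> f = nx l.
Proof. by move=> hl hf; apply/val_inj; rewrite nxE /nxn hl ltnn hf. Qed.

Lemma sg_last (R : pzRingType) (l : 'I_n) : val l = m.+1 -> sg R l = -1.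
Proof. by move=> hl; rewrite /sg hl ltnn. Qed.

Lemma nx_cases (j : 'I_n) :
  ((j.+1 < n)%N /\ nat_of_ord (nx j) = j.+1) \/ (nat_of_ord j = m.+1 /\ nat_of_ord (nx j) = 0%N).
Proof.
rewrite nxE /nxn /=; case: ifP => h; [left | right]; split => //.
have := ltn_ord j; move: h; rewrite /=; lia.
Qed.

Variable R : realType.
Variable S : 'M[R]_n.
Hypothesis hS : signed_perm_mx S.

Lemma conds_of_comm : S *m Cm m R = Cm m R *m S ->
  [/\ (forall i j i' j' : 'I_n, val i' = (val i).+1 -> val j' = (val j).+1 ->
          S i j = S i' j'),
      (forall i i' l f : 'I_n, val i' = (val i).+1 -> val l = n.-1 ->
          val f = 0%N -> S i l = - S i' f),
      (forall j j' l f : 'I_n, val j' = (val j).+1 -> val l = n.-1 ->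
          val f = 0%N -> S l j = - S f j')
    & (forall l f : 'I_n, val l = n.-1 -> val f = 0%N -> S l l = S f f)].
Proof.
move=> comm.
have cE i k : S (nx i) (nx k) * sg R k = sg R i * S i k.
  by have := congr1 (fun M : 'M[R]_n => M (nx i) k) comm; rewrite /= mulmx_Cm_r mulmx_Cm_l.
split.
- move=> i j i' j' hi hj; have := cE i j.
  by rewrite -(nx_succ hi) -(nx_succ hj) (sg_succ R hi) (sg_succ R hj) mulr1 mul1r.
- move=> i i' l f hi hl hf; have := cE i l.
  by rewrite -(nx_succ hi) -(nx_last hl hf) (sg_succ R hi) (sg_last R hl) mulrN1 mul1r => <-.
- move=> j j' l f hj hl hf; have := cE l j.
  by rewrite -(nx_succ hj) -(nx_last hl hf) (sg_succ R hj) (sg_last R hl) mulr1 mulN1r => ->; rewrite opprK.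
- move=> l f hl hf; have := cE l l.
  rewrite -(nx_last hl hf) (sg_last R hl) mulrN1 mulN1r => /eqP; rewrite eqr_opp => /eqP ->.
  done.
Qed.

Lemma comm_of_conds :
  [/\ (forall i j i' j' : 'I_n, val i' = (val i).+1 -> val j' = (val j).+1 ->
          S i j = S i' j'),
      (forall i i' l f : 'I_n, val i' = (val i).+1 -> val l = n.-1 ->
          val f = 0%N -> S i l = - S i' f),
      (forall j j' l f : 'I_n, val j' = (val j).+1 -> val l = n.-1 ->
          val f = 0%N -> S l j = - S f j')
    & (forall l f : 'I_n, val l = n.-1 -> val f = 0%N -> S l l = S f f)] ->
  S *m Cm m R = Cm m R *m S.
Proof.
case=> C1 C2 C3 C4; apply/matrixP => i k.
have [j ->] := nx_surj i.
rewrite mulmx_Cm_r mulmx_Cm_l /sg.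
case: (nx_cases j) => [[hj ej]|[hj ej]]; case: (nx_cases k) => [[hk ek]|[hk ek]].
- by rewrite hj hk mulr1 mul1r (C1 j k (nx j) (nx k) ej ek).
- by rewrite hj hk ltnn mulrN1 mul1r (C2 j (nx j) k (nx k) ej hk ek) ?opprK.
- by rewrite hk hj ltnn mulr1 mulN1r (C3 k (nx k) j (nx j) ek hj ej) opprK.
- have jk : j = k by apply/val_inj => /=; rewrite hj hk.
  by rewrite -jk hj ltnn mulrN1 mulN1r (C4 j (nx j) hj ej).
Qed.

Lemma lattice_of_comm (p q : R) : S *m Cm m R = Cm m R *m S ->
  forall x, mx_image S (lattice (Amx n p q)) x <-> lattice (Amx n p q) x.
Proof.
move=> comm.
have StS := sp_trS hS; have SSt := sp_Str hS.
have comm2 : S^T *m Cm m R = Cm m R *m S^T.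
  rewrite -[S^T *m _]mulmx1 -SSt !mulmxA -(mulmxA S^T) -comm mulmxA StS mul1mx //.
have AS (T : 'M[R]_n) : T *m Cm m R = Cm m R *m T -> T *m Amx n p q = Amx n p q *m T.
  move=> hT; rewrite AmxE mulmxBr mulmxBl mul_mx_scalar mul_scalar_mx.
  by rewrite -scalemxAr -scalemxAl hT.
have SiS := SiE hS.
have SiT : map_mx (fun k : int => k%:~R) (Si S)^T = S^T by rewrite -map_trmx SiS.
move=> x; split.
  case=> y [[z hz] ->]; exists (Si S *m z).
  by rewrite map_mxM SiS hz mulmxA (AS S comm) -mulmxA.
case=> z ->; exists (S^T *m (Amx n p q *m map_mx (fun k : int => k%:~R) z)); split.
  exists ((Si S)^T *m z).
  by rewrite map_mxM SiT mulmxA (AS _ comm2) -mulmxA.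
by rewrite mulmxA SSt mul1mx.
Qed.

End Final.

Lemma main_thm (R : realType) (m : nat) (p q : R)
  (hp : 0 < p) (hpq : p < q) (S : 'M[R]_m.+2) (hS : signed_perm_mx S) :
  (forall x, mx_image S (lattice (Amx m.+2 p q)) x <-> lattice (Amx m.+2 p q) x) <->
  [/\ (forall i j i' j' : 'I_m.+2, val i' = (val i).+1 -> val j' = (val j).+1 ->
          S i j = S i' j'),
      (forall i i' l f : 'I_m.+2, val i' = (val i).+1 -> val l = m.+2.-1 ->
          val f = 0%N -> S i l = - S i' f),
      (forall j j' l f : 'I_m.+2, val j' = (val j).+1 -> val l = m.+2.-1 ->
          val f = 0%N -> S l j = - S f j')
    & (forall l f : 'I_m.+2, val l = m.+2.-1 -> val f = 0%N -> S l l = S f f)].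
Proof.
split.
  move=> H; apply: conds_of_comm; apply/matrixP => i k. exact (@comm_col R m p q hp hpq S hS H k i).
by move=> C; apply: (@lattice_of_comm m R S hS p q); apply: comm_of_conds C.
Qed.

Theorem theorem3 (R : realType) (n : nat) (hn : (2 <= n)%N) (p q : R)
  (hp : 0 < p) (hpq : p < q) (S : 'M[R]_n) (hS : signed_perm_mx S) :
  (forall x, mx_image S (lattice (Amx n p q)) x <-> lattice (Amx n p q) x) <->
  [/\ (forall i j i' j' : 'I_n, val i' = (val i).+1 -> val j' = (val j).+1 ->
          S i j = S i' j'),
      (forall i i' l f : 'I_n, val i' = (val i).+1 -> val l = n.-1 ->
          val f = 0%N -> S i l = - S i' f),
      (forall j j' l f : 'I_n, val j' = (val j).+1 -> val l = n.-1 ->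
          val f = 0%N -> S l j = - S f j')
    & (forall l f : 'I_n, val l = n.-1 -> val f = 0%N -> S l l = S f f)].
Proof.
move: hn S hS; case: n => [|[|m]] // _ S hS.
exact (@main_thm R m p q hp hpq S hS).
Qed.
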